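(* Let $\alpha\in(0,1)$, $R_{th}>0$ and put $\varepsilon = 2^{2R_{th}/(1-\alpha)}-1$. For a link $j\in\{SR_m,\;R_mD\}$ let the IQI amplitude/phase parameters $\xi_{t_j},\xi_{r_j}>0$, $\phi_{t_j},\phi_{r_j}\in\mathbb{R}$ be given, set $\mu_{t_j}=\tfrac12(1+\xi_{t_j}e^{i\phi_{t_j}})$, $v_{t_j}=\tfrac12(1-\xi_{t_j}e^{-i\phi_{t_j}})$, $\mu_{r_j}=\tfrac12(1+\xi_{r_j}e^{-i\phi_{r_j}})$, $v_{r_j}=\tfrac12(1-\xi_{r_j}e^{i\phi_{r_j}})$, and $p_j=|\mu_{t_j}\mu_{r_j}+v_{t_j}^*v_{r_j}|^2$, $q_j=|\mu_{r_j}v_{t_j}+\mu_{t_j}^*v_{r_j}|^2$. Assume $p_j-\varepsilon q_j>0$ for both links. Let $X_{SR_m}=|\hat h_{SR_m}|^2$ and $X_{R_mD}=|\hat h_{R_mD}|^2$ be independent exponential random variables with rates $\lambda_{SR_m}>0$ and $\lambda_{R_mD}>0$ (i.e. $\Pr\{X_j>x\}=e^{-\lambda_j x}$ for $x\ge 0$), and let the channel-estimation-error variances satisfy $\sigma^2_{e_{SR_m}}=\sigma^2_{e_{R_mD}}=t>0$. Define the high-SNR capacities $$C^{\infty}_{j}=\frac{1-\alpha}{2}\log_2\!\Big(1+\frac{X_j p_j}{\sigma^2_{e_j}p_j+X_j q_j+\sigma^2_{e_j}q_j}\Big),\quad j\in\{SR_m,R_mD\}.$$ Then $$\Pr\{\min(C^\infty_{SR_m},C^\infty_{R_mD})<R_{th}\}=1-e^{-\lambda_{SR_m}H_1-\lambda_{R_mD}H_2},$$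 where $H_1=\dfrac{\varepsilon\sigma^2_{e_{SR_m}}(p_{SR_m}+q_{SR_m})}{p_{SR_m}-\varepsilon q_{SR_m}}$ and $H_2=\dfrac{\varepsilon\sigma^2_{e_{R_mD}}(p_{R_mD}+q_{R_mD})}{p_{R_mD}-\varepsilon q_{R_mD}}$.
   Context: Dual-hop decode-and-forward relaying from a source $S$ via a randomly chosen relay $R_m$ to a destination $D$, in the presence of transmitter/receiver I/Q imbalance and channel estimation errors; $\hat h_j$ denotes the estimated channel of link $j$ under Rayleigh fading, $\sigma^2_{e_j}$ the estimation-error variance, $\alpha$ the energy-harvesting time-allocation factor. The quantity on the left is the asymptotic (high-SNR) outage probability of random relay selection; $z^*$ denotes complex conjugate and $i$ the imaginary unit. *)

(* Defs.v *)
From HB Require Import structures.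
From mathcomp Require Import all_boot all_order all_algebra.
From mathcomp Require Import all_classical all_reals all_analysis.
From mathcomp Require Import complex.
Set Implicit Arguments. Unset Strict Implicit. Unset Printing Implicit Defensive.
Import Order.TTheory GRing.Theory Num.Theory.
Import numFieldNormedType.Exports.
Local Open Scope classical_set_scope.
Local Open Scope ring_scope.

Section IQI.
Variable R : realType.
Local Open Scope complex_scope.

Definition cexpi (phi : R) : R[i] := cos phi +i* sin phi.
Definition half : R[i] := (2%:R)^-1.
Definition mu_t (xi phi : R) : R[i] := half * (1 + xi%:C * cexpi phi).
Definition v_t (xi phi : R) : R[i] := half * (1 - xi%:C * cexpi (- phi)).
Definition mu_r (xi phi : R) : R[i] := half * (1 + xi%:C * cexpi (- phi)).
Definition v_r (xi phi : R) : R[i] := half * (1 - xi%:C * cexpi phi).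

Definition sqabs (z : R[i]) : R := (Normc.normc z) ^+ 2.

Definition p_iqi (xit phit xir phir : R) : R :=
  sqabs (mu_t xit phit * mu_r xir phir + (v_t xit phit)^* * v_r xir phir).
Definition q_iqi (xit phit xir phir : R) : R :=
  sqabs (mu_r xir phir * v_t xit phit + (mu_t xit phit)^* * v_r xir phir).
End IQI.

Definition log2 {R : realType} (x : R) : R := ln x / ln 2.

Definition Cinf {R : realType} (alpha p q s2 x : R) : R :=
  (1 - alpha) / 2 * log2 (1 + x * p / (s2 * p + x * q + s2 * q)).

Definition exp_tail {R : realType} {d} {T : measurableType d}
  (P : probability T R) (X : T -> R) (lam : R) : Prop :=
  forall x : R, 0 <= x -> P [set w | x < X w] = (expR (- (lam * x)))%:E.

Definition indep2 {R : realType} {d} {T : measurableType d}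
  (P : probability T R) (X Y : T -> R) : Prop :=
  forall A B : set R, measurable A -> measurable B ->
    P (X @^-1` A `&` Y @^-1` B) = (P (X @^-1` A) * P (Y @^-1` B))%E.

(* Main.v *)
Require Import Defs.
From HB Require Import structures.
From mathcomp Require Import all_boot all_order all_algebra.
From mathcomp Require Import all_classical all_reals all_analysis.
From mathcomp Require Import complex.
From mathcomp Require Import lra ring.
From mathcomp Require Import measurable_realfun.
Import Order.TTheory GRing.Theory Num.Theory.
Import numFieldNormedType.Exports.
Local Open Scope classical_set_scope.
Local Open Scope ring_scope.
Lemma eps_gt0 (R : realType) (alpha Rth : R) : 0 < alpha < 1 -> 0 < Rth ->
  0 < 2 `^ (2 * Rth / (1 - alpha)) - 1.
Proof.
move=> /andP[a0 a1] r0.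
have k0 : 0 < 2 * Rth / (1 - alpha) by apply: divr_gt0; [lra | lra].
rewrite subr_gt0.
have h2 : (0:R) < 2 `^ (2 * Rth / (1 - alpha)) by apply: powR_gt0.
rewrite -(ltr_ln (x:=1)) ?posrE // ln1 ln_powR.
by apply: mulr_gt0 => //; apply: ln_gt0; lra.
Qed.

Lemma key0 (R : realType) (alpha Rth p q t x : R) : 0 < alpha < 1 -> 0 < Rth ->
  0 < t -> 0 <= q -> 0 < x ->
  0 < p - (2 `^ (2 * Rth / (1 - alpha)) - 1) * q ->
  (Cinf alpha p q t x < Rth) =
  (x < (2 `^ (2 * Rth / (1 - alpha)) - 1) * t * (p + q) /
       (p - (2 `^ (2 * Rth / (1 - alpha)) - 1) * q)).
Proof.
move=> ha r0 t0 q0 x0.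
have e0 := @eps_gt0 R alpha Rth ha r0.
move: e0; set k := 2 * Rth / (1 - alpha); set eps := 2 `^ k - 1 => e0 hp.
case/andP: ha => a0 a1.
have p0 : 0 < p by nra.
have D0 : 0 < t * p + x * q + t * q by nra.
have y0 : 0 < 1 + x * p / (t * p + x * q + t * q).
  by apply: addr_gt0 => //; apply: divr_gt0 => //; nra.
have l2 : 0 < ln (2:R) by apply: ln_gt0; lra.
have h2 : (0:R) < 2 `^ k by apply: powR_gt0.
rewrite /Cinf /log2.
have -> : ((1 - alpha) / 2 * (ln (1 + x * p / (t * p + x * q + t * q)) / ln 2) < Rth)
   = (ln (1 + x * p / (t * p + x * q + t * q)) < ln (2 `^ k)).
  rewrite ln_powR /k.
  rewrite mulrA ltr_pdivrMr // -ltr_pdivlMl; last by apply: divr_gt0; lra.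
  congr (_ < _); field; lra.
rewrite ltr_ln ?posrE //.
have -> : 2 `^ k = 1 + eps by rewrite /eps; ring.
rewrite ltrD2l ltr_pdivrMr // ltr_pdivlMr //.
apply/idP/idP => H; nra.
Qed.

Lemma meas_inv (R : realType) : measurable_fun setT (fun x : R => x^-1).
Proof.
have -> : [set: R] = ~` [set 0] `|` [set 0].
  apply/seteqP; split => x _ //=; have [->|] := eqVneq x 0; [by right|by move=> h; left => /= hx; rewrite hx eqxx in h].
have m0 : measurable [set (0:R)].
  by rewrite -(set_itv1 (0:R)); apply: measurable_itv.
apply/measurable_funU => //; first exact: measurableC.
split.
  apply: open_continuous_measurable_fun.
    by apply: closed_openC; apply: accessible_closed_set1; apply: hausdorff_accessible; apply: Rhausdorff.
  by move=> x; rewrite inE => /eqP x0; apply: inv_continuous.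
move=> _ Y mY.
have [Y0|Y0] := pselect (Y (0:R)^-1).
  rewrite (_ : _ `&` _ = [set 0]) //.
  by apply/seteqP; split => [x [->]//|x ->]; split.
rewrite (_ : _ `&` _ = set0) //.
by apply/seteqP; split => [x [/= -> ]//|x].
Qed.

Lemma meas_C (R : realType) (alpha p q t : R) : measurable_fun setT (Cinf alpha p q t).
Proof.
rewrite /Cinf /log2.
apply: measurable_funM; first exact: measurable_cst.
apply: measurable_funM; last exact: measurable_cst.
apply: measurableT_comp; first exact: measurable_ln.
apply: measurable_funD; first exact: measurable_cst.
apply: measurable_funM.
  by apply: measurable_funM; [exact: measurable_id|exact: measurable_cst].
apply: measurableT_comp; first exact: meas_inv.
apply: measurable_funD; last exact: measurable_cst.
apply: measurable_funD; first exact: measurable_cst.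
by apply: measurable_funM; [exact: measurable_id|exact: measurable_cst].
Qed.

Lemma full_meas (R : realType) (d : measure_display) (T : measurableType d)
  (P : probability T R) (A S : set T) :
  measurable A -> measurable S -> P S = 1%E -> P (A `&` S) = P A.
Proof.
move=> mA mS PS.
rewrite (measureDI P mA mS).
rewrite [X in _ = (X + _)%E](_ : _ = 0%E) ?add0e //.
  apply/eqP; rewrite eq_le measure_ge0 andbT.
  have : (P (A `\` S) <= P (~` S))%E.
    apply: le_measure; rewrite ?inE.
    - exact: measurableD.
    - exact: measurableC.
    - by move=> w [].
  by rewrite probability_setC // PS subee.
Qed.

Lemma tail_ge (R : realType) (d : measure_display) (T : measurableType d)
  (P : probability T R) (X : {mfun T >-> R}) (lam H : R) :
  0 < lam -> 0 < H -> exp_tail P X lam ->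
  P (X @^-1` `[H, +oo[) = (expR (- (lam * H)))%:E.
Proof.
move=> l0 H0 ht.
have mA : measurable (X @^-1` `[H, +oo[) by apply: measurable_funPTI; exact: measurable_itv.
have mgt : forall y, measurable [set w | y < X w].
  move=> y; rewrite (_ : [set w | y < X w] = X @^-1` `]y, +oo[).
    by apply: measurable_funPTI; exact: measurable_itv.
  by apply/seteqP; split => w /=; rewrite in_itv /= andbT.
have fin : P (X @^-1` `[H, +oo[) = (fine (P (X @^-1` `[H, +oo[)))%:E.
  by rewrite fineK // fin_num_measure.
move: fin; set r := fine _ => fin; rewrite fin.
have low : expR (- (lam * H)) <= r.
  rewrite -lee_fin -fin -(ht H (ltW H0)).
  apply: le_measure; rewrite ?inE //.
  by move=> w /= hw; rewrite in_itv /= andbT ltW.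
have up : forall δ, 0 < δ < H -> r <= expR (- (lam * (H - δ))).
  move=> δ /andP[d0 dH].
  rewrite -lee_fin -fin -(ht (H - δ)); last by lra.
  apply: le_measure; rewrite ?inE //.
  move=> w /=; rewrite in_itv /= andbT => hw; lra.
congr (_%:E); apply/eqP; rewrite eq_le low andbT.
rewrite leNgt; apply/negP => hlt.
have r0 : 0 < r by apply: lt_trans hlt; exact: expR_gt0.
have hl : - (lam * H) < ln r by rewrite -ltr_expR lnK // posrE.
set g := ln r + lam * H.
have g0 : 0 < g by rewrite /g; lra.
set δ := Num.min (H / 2) (g / (2 * lam)).
have d0 : 0 < δ by rewrite lt_min; apply/andP; split; apply: divr_gt0 => //; lra.
have dH : δ <= H / 2 by rewrite ge_min lexx.
have dg : δ <= g / (2 * lam) by rewrite ge_min lexx orbT.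
have := up δ; rewrite d0 /=.
have -> : (δ < H) = true by apply/idP; lra.
move=> /(_ isT); apply/negP; rewrite -ltNge.
rewrite -[X in _ < X]lnK ?posrE // ltr_expR.
have : lam * δ <= g / 2.
  apply: (le_trans (ler_wpM2l (ltW l0) dg)).
  by rewrite le_eqVlt; apply/orP; left; apply/eqP; field; lra.
rewrite /g in g0 *; lra.
Qed.

Arguments full_meas {R d T} P {A S}.
Arguments tail_ge {R d T P X lam H}.

Lemma mlt (R : realType) (d : measure_display) (T : measurableType d)
  (f : T -> R) (r : R) : measurable_fun setT f -> measurable [set w | f w < r].
Proof.
move=> mf; have := mf measurableT _ (measurable_itv `]-oo, r[).
rewrite setTI; congr measurable.
Qed.

Theorem corollary1 (R : realType) (d : measure_display) (T : measurableType d)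
  (P : probability T R) (X1 X2 : {mfun T >-> R})
  (alpha Rth t lam1 lam2 : R)
  (xit1 phit1 xir1 phir1 xit2 phit2 xir2 phir2 : R) :
  0 < alpha < 1 -> 0 < Rth -> 0 < t -> 0 < lam1 -> 0 < lam2 ->
  0 < xit1 -> 0 < xir1 -> 0 < xit2 -> 0 < xir2 ->
  let eps := 2 `^ (2 * Rth / (1 - alpha)) - 1 in
  let p1 := p_iqi xit1 phit1 xir1 phir1 in
  let q1 := q_iqi xit1 phit1 xir1 phir1 in
  let p2 := p_iqi xit2 phit2 xir2 phir2 in
  let q2 := q_iqi xit2 phit2 xir2 phir2 in
  0 < p1 - eps * q1 -> 0 < p2 - eps * q2 ->
  exp_tail P X1 lam1 -> exp_tail P X2 lam2 -> indep2 P X1 X2 ->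
  let H1 := eps * t * (p1 + q1) / (p1 - eps * q1) in
  let H2 := eps * t * (p2 + q2) / (p2 - eps * q2) in
  P [set w | Num.min (Cinf alpha p1 q1 t (X1 w)) (Cinf alpha p2 q2 t (X2 w)) < Rth]
  = (1 - expR (- (lam1 * H1) - lam2 * H2))%:E.
Proof.
move=> ha r0 t0 l10 l20 _ _ _ _ eps p1 q1 p2 q2 hp1 hp2 ht1 ht2 hind H1 H2.
have q10 : 0 <= q1 by rewrite /q1 /q_iqi /sqabs sqr_ge0.
have q20 : 0 <= q2 by rewrite /q2 /q_iqi /sqabs sqr_ge0.
have e0 : 0 < eps := @eps_gt0 R alpha Rth ha r0.
have hH1 : 0 < H1.
  rewrite /H1; apply: divr_gt0 => //; apply: mulr_gt0; first exact: mulr_gt0.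
  by have := mulr_ge0 (ltW e0) q10; lra.
have hH2 : 0 < H2.
  rewrite /H2; apply: divr_gt0 => //; apply: mulr_gt0; first exact: mulr_gt0.
  by have := mulr_ge0 (ltW e0) q20; lra.
have k1 : forall x, 0 < x -> (Cinf alpha p1 q1 t x < Rth) = (x < H1).
  by move=> x x0; exact: (@key0 R alpha Rth p1 q1 t x ha r0 t0 q10 x0 hp1).
have k2 : forall x, 0 < x -> (Cinf alpha p2 q2 t x < Rth) = (x < H2).
  by move=> x x0; exact: (@key0 R alpha Rth p2 q2 t x ha r0 t0 q20 x0 hp2).
have mX1 := measurable_funPT X1.
have mX2 := measurable_funPT X2.
have eX1 : X1 @^-1` `]0, +oo[ = [set w | 0 < X1 w].
  by apply/seteqP; split => w /=; rewrite in_itv /= andbT.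
have eX2 : X2 @^-1` `]0, +oo[ = [set w | 0 < X2 w].
  by apply/seteqP; split => w /=; rewrite in_itv /= andbT.
have mS : measurable ([set w | 0 < X1 w] `&` [set w | 0 < X2 w]).
  by rewrite -eX1 -eX2; apply: measurableI; apply: measurable_funPTI; exact: measurable_itv.
have PS : P ([set w | 0 < X1 w] `&` [set w | 0 < X2 w]) = 1%E.
  rewrite -eX1 -eX2 hind; try exact: measurable_itv.
  rewrite eX1 eX2 ht1 // ht2 // !mulr0 oppr0 expR0.
  by rewrite mule1.
have mG : measurable (X1 @^-1` `[H1, +oo[ `&` X2 @^-1` `[H2, +oo[).
  by apply: measurableI; apply: measurable_funPTI; exact: measurable_itv.
have mE : measurable [set w | Num.min (Cinf alpha p1 q1 t (X1 w)) (Cinf alpha p2 q2 t (X2 w)) < Rth].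
  rewrite (_ : [set w | _] = [set w | Cinf alpha p1 q1 t (X1 w) < Rth] `|`
                             [set w | Cinf alpha p2 q2 t (X2 w) < Rth]).
    apply: measurableU; apply: mlt; apply: measurableT_comp => //; exact: meas_C.
  apply/seteqP; split => w /=; rewrite gt_min.
    by case/orP => h; [left|right].
  by case => ->; rewrite ?orbT.
rewrite -(full_meas P mE mS PS).
rewrite (_ : [set w | Num.min (Cinf alpha p1 q1 t (X1 w)) (Cinf alpha p2 q2 t (X2 w)) < Rth]
   `&` ([set w | 0 < X1 w] `&` [set w | 0 < X2 w]) = ~` (X1 @^-1` `[H1, +oo[ `&` X2 @^-1` `[H2, +oo[) `&`
                        ([set w | 0 < X1 w] `&` [set w | 0 < X2 w])); last first.
  apply/seteqP; split => w /= [hE [h1 h2]]; split => //=.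
    rewrite gt_min k1 // k2 // in hE.
    rewrite !in_itv /= !andbT => -[ha1 hb1].
    by case/orP: hE => h; lra.
  rewrite gt_min k1 // k2 //.
  case: (ltP (X1 w) H1) => [//| a]; case: (ltP (X2 w) H2) => [//|b].
  by exfalso; apply: hE; rewrite /= !in_itv /= !andbT a b.
rewrite (full_meas P (measurableC mG) mS PS) probability_setC //.
rewrite hind; try exact: measurable_itv.
rewrite (tail_ge l10 hH1 ht1) (tail_ge l20 hH2 ht2).
by rewrite -EFinM -EFinB expRD.
Qed.
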